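(* Let $G=(V,E)$ be a graph of bounded degree and consider the rescaled SEIS process $\eta_t$ on $G$ with parameters $\lambda>0,\tau>0$, constructed from its graphical representation. Let $R\subset\mathcal{S}$ be the closure of an open set. If $R$ is onset-ordered and $\eta$ is good for $R$, then almost surely: (1) for each $t\ge0$, $\eta_t(x)=2$ for at most one $x$ in the set $\{x\in V:(x,t)\in R\}$; and (2) every potentially active path $\gamma$ contained in $R$ whose base $(y,s)$ satisfies $\eta_s(y)=1$ is active.
   Context: The SEIS process: sites in states $0$ (susceptible), $1$ (exposed), $2$ (infectious). Rescaled graphical representation: on $\mathcal{S}=V\times[0,\infty)$ (topology generated by sets $\{a\}\times(t,t')$, $a\in V\cup E$), independent Poisson processes of recovery labels $\times$ (intensity $\tau$) and onset labels $\star$ (intensity $1$) at each site, and transmission labels $\leftrightarrow$ (intensity $\lambda\tau$) along each edge. The process evolves by: at a $\times$ at $x$, if $x$ is in state $2$ it becomes $0$; at a $\star$ at $x$, if $x$ is in state $1$ it becomes $2$; at a $\leftrightarrow$ on $xy$, if one endpoint is in state $2$ and the other in state $0$, the latter becomes $1$; otherwise nothing happens. A path is a list $(v_1,h_1,\dots,v_{m-1},h_{m-1},v_m)$ with $v_i=\{x_i\}\times(t_{i-1},t_i)$, $t_{i-1}<t_i$, and $h_i=\{x_ix_{i+1}\}\times\{t_i\}$ with $x_ix_{i+1}\in E$; its base is $(x_1,t_0)$ and its end is $(x_m,t_m)$. A path is active if for $i=1,\dots,m-1$, $\eta_{t_i}(x_i)=2$, $\eta_{t_i}(x_{i+1})=1$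 and there is a $\leftrightarrow$ label at $h_i$, and for $i=1,\dots,m$, $\eta_t(x_i)\ne0$ for $t\in(t_{i-1},t_i)$. A path is potentially active if (a) for $i=1,\dots,m-1$ there is a $\leftrightarrow$ label at $h_i$; (b) for $i=1,\dots,m-1$ there is a $\star$ label at some $(x_i,t)\in v_i$ such that there are no $\star$ labels in $\{x_i\}\times(t_{i-1},t)$ and no $\times$ labels in $\{x_i\}\times(t,t_i)$; (c) for any $\star$ label at $(x_m,t)\in v_m$ there are no $\times$ labels in $\{x_m\}\times(t,t_m)$. The base of $R$ is $\mathrm{base}(R)=\{(x,t)\in R:(x,t-\epsilon)\notin R\text{ for all small enough }\epsilon>0\}$. $R$ is onset-ordered if whenever there is a $\star$ label at $(x,t)\in R$ and $\{x\}\times(t,t')\subset R$ with $t<t'$, then for any $\star$ label at a point $(y,s)\in R$ with $s\in(t,t')$ there is a $\times$ label at $(x,s')$ for some $s'\in(t,s)$. $\eta$ is good for $R$ if $\eta_t(x)\ne2$ for all $(x,t)\in\mathrm{base}(R)$. *)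

(* Defs.v *)
From HB Require Import structures.
From mathcomp Require Import all_boot all_order all_algebra.
From mathcomp Require Import all_classical all_reals all_analysis.
Set Implicit Arguments. Unset Strict Implicit. Unset Printing Implicit Defensive.
Import Order.TTheory GRing.Theory Num.Theory.
Import numFieldNormedType.Exports.
Local Open Scope classical_set_scope.
Local Open Scope ring_scope.

(* states of the SEIS process: 0 susceptible, 1 exposed, 2 infectious *)
Inductive state := st0 | st1 | st2.

Inductive lab (V E : Type) := LCross of V | LStar of V | LTrans of E.

Fixpoint allP (T : Type) (P : T -> Prop) (s : seq T) : Prop :=
  match s with [::] => True | a :: s' => P a /\ allP P s' end.

Section Defs.
Variables (R : realType) (V E : Type) (ends : E -> V * V).

Definition joins (e : E) (x y : V) := ends e = (x, y) \/ ends e = (y, x).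
Definition incident (e : E) (x : V) := (ends e).1 = x \/ (ends e).2 = x.
Definition simple_graph :=
  (forall e, (ends e).1 <> (ends e).2) /\
  (forall e e' x y, joins e x y -> joins e' x y -> e = e').
Definition bounded_degree :=
  exists D : nat, forall (x : V) (f : 'I_D.+1 -> E),
    (forall i, incident (f i) x) -> ~ injective f.

Definition seis_rate (lam tau : R) (i : lab V E) : R :=
  match i with LCross _ => tau | LStar _ => 1 | LTrans _ => lam * tau end.

Definition count_is (A : set R) (a b : R) (k : nat) :=
  exists s : seq R, [/\ uniq s, [set` s] = A `&` [set u | a < u <= b] & size s = k].

Definition poisson_prob (mu : R) (k : nat) : R :=
  expR (- mu) * mu ^+ k / (k`!)%:R.

(* N is a family, indexed by lab V E, of independent Poisson point processes
   on (0,oo) with rates rate: counts in disjoint intervals of the same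
   process and counts of different processes are jointly independent
   Poisson variables with the right means. *)
Definition indep_poisson (d : measure_display) (Omega : measurableType d)
    (P : probability Omega R) (N : Omega -> lab V E -> set R)
    (rate : lab V E -> R) :=
  [/\ (forall w i, N w i `<=` [set t | 0 < t]),
      (forall i a b k, measurable [set w | count_is (N w i) a b k]) &
      (forall n (I : 'I_n -> lab V E) (a b : 'I_n -> R) (k : 'I_n -> nat),
        (forall j, 0 <= a j <= b j) ->
        (forall j1 j2, j1 != j2 -> I j1 = I j2 -> b j1 <= a j2 \/ b j2 <= a j1) ->
        P [set w | forall j, count_is (N w (I j)) (a j) (b j) (k j)]
        = (\prod_(j < n) poisson_prob (rate (I j) * (b j - a j)) (k j))%:E)].

Section Dyn.
Variables (Cr St : V -> set R) (Tr : E -> set R).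

Definition lft (eta : R -> V -> state) (x : V) (t : R) (v : state) :=
  exists2 eps : R, 0 < eps & forall s, t - eps < s < t -> eta s x = v.
Definition rconst (eta : R -> V -> state) (x : V) (t : R) :=
  exists2 eps : R, 0 < eps & forall s, t <= s < t + eps -> eta s x = eta t x.
Definition infect_cond (eta : R -> V -> state) (x : V) (t : R) :=
  exists e y, [/\ joins e x y, Tr e t & lft eta y t st2].

Definition evolves (eta : R -> V -> state) :=
  (forall x t, 0 <= t -> rconst eta x t) /\
  (forall x t, 0 < t -> exists v, lft eta x t v /\
     [/\ (Cr x t /\ v = st2 -> eta t x = st0),
         (St x t /\ v = st1 -> eta t x = st2),
         (v = st0 /\ infect_cond eta x t -> eta t x = st1) &
         (~ (Cr x t /\ v = st2) -> ~ (St x t /\ v = st1) ->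
          ~ (v = st0 /\ infect_cond eta x t) -> eta t x = v)]).

(* the topology generated by {a} x (t,t') is the disjoint union over
   a in V u E of copies of [0,oo); the closure of an open set is the
   union of the closures of its (open) slices *)
Definition closure_of_open (Rg : set ((V + E) * R)) :=
  exists O : V + E -> set R, (forall a, open (O a)) /\
    forall a t, Rg (a, t) <-> closure (O a `&` [set u | 0 <= u]) t.

Definition in_base (Rg : set ((V + E) * R)) (a : V + E) (t : R) :=
  Rg (a, t) /\ exists2 eps : R, 0 < eps & forall dl, 0 < dl < eps -> ~ Rg (a, t - dl).

Definition good (eta : R -> V -> state) (Rg : set ((V + E) * R)) :=
  forall x t, in_base Rg (inl x) t -> eta t x <> st2.

Definition onset_ordered (Rg : set ((V + E) * R)) :=
  forall x t t', St x t -> Rg (inl x, t) -> t < t' ->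
    (forall u, t < u < t' -> Rg (inl x, u)) ->
    forall y s, St y s -> Rg (inl y, s) -> t < s < t' ->
      exists2 s', t < s' < s & Cr x s'.

(* a path (v_1,h_1,...,v_m): first site x_1, base time t_0, hops
   (t_i, edge x_i x_{i+1}, x_{i+1}) for i = 1..m-1, and end time t_m *)
Record spath := SPath { p_x : V; p_t0 : R; p_hops : seq (R * E * V); p_tend : R }.

Fixpoint inner_segs (x : V) (s : R) (hs : seq (R * E * V)) : seq (V * R * R) :=
  match hs with
  | [::] => [::]
  | (t, e, y) :: hs' => (x, s, t) :: inner_segs y t hs'
  end.
Fixpoint last_seg (x : V) (s : R) (hs : seq (R * E * V)) (tend : R) : V * R * R :=
  match hs with
  | [::] => (x, s, tend)
  | (t, e, y) :: hs' => last_seg y t hs' tend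
  end.
Fixpoint hopsx (x : V) (hs : seq (R * E * V)) : seq (V * R * E * V) :=
  match hs with
  | [::] => [::]
  | (t, e, y) :: hs' => (x, t, e, y) :: hopsx y hs'
  end.

Definition p_inner (p : spath) := inner_segs (p_x p) (p_t0 p) (p_hops p).
Definition p_last (p : spath) := last_seg (p_x p) (p_t0 p) (p_hops p) (p_tend p).
Definition p_segs (p : spath) := rcons (p_inner p) (p_last p).
Definition p_hopsx (p : spath) := hopsx (p_x p) (p_hops p).

Definition wf_path (p : spath) :=
  allP (fun '(x, s, t) => s < t) (p_segs p) /\
  allP (fun '(x, t, e, y) => joins e x y) (p_hopsx p).

Definition path_in (Rg : set ((V + E) * R)) (p : spath) :=
  allP (fun '(x, s, t) => forall u, s < u < t -> Rg (inl x, u)) (p_segs p) /\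
  allP (fun '(x, t, e, y) => Rg (inr e, t)) (p_hopsx p).

Definition active (eta : R -> V -> state) (p : spath) :=
  allP (fun '(x, t, e, y) => [/\ eta t x = st2, eta t y = st1 & Tr e t]) (p_hopsx p) /\
  allP (fun '(x, s, t) => forall u, s < u < t -> eta u x <> st0) (p_segs p).

Definition pot_active (p : spath) :=
  [/\ allP (fun '(x, t, e, y) => Tr e t) (p_hopsx p),
      allP (fun '(x, s, t) => exists u, [/\ s < u < t, St x u,
              (forall w, s < w < u -> ~ St x w) &
              (forall w, u < w < t -> ~ Cr x w)]) (p_inner p) &
      (let '(x, s, t) := p_last p in
       forall u, s < u < t -> St x u -> forall w, u < w < t -> ~ Cr x w)].

End Dyn.
End Defs.

(* Main.v *)
Require Import Defs.
From HB Require Import structures.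
From mathcomp Require Import all_boot all_order all_algebra.
From mathcomp Require Import all_classical all_reals all_analysis.
From mathcomp Require Import ring lra.
Set Implicit Arguments. Unset Strict Implicit. Unset Printing Implicit Defensive.
Import Order.TTheory GRing.Theory Num.Theory.
Import numFieldNormedType.Exports.
Local Open Scope classical_set_scope.
Local Open Scope ring_scope.

Section Dyn.
Variables (R : realType) (V E : Type) (ends : E -> V * V).
Variables (Cr St : V -> set R) (Tr : E -> set R) (eta : R -> V -> state).
Hypothesis ev : evolves ends Cr St Tr eta.

Lemma lft_uniq x t v v' : lft eta x t v -> lft eta x t v' -> v = v'.
Proof.
move=> [e1 e10 h1] [e2 e20 h2].
have hm : 0 < Num.min e1 e2 by rewrite lt_min e10 e20.
set s := t - Num.min e1 e2 / 2.
have hs : 0 < Num.min e1 e2 / 2 by rewrite divr_gt0.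
have hle1 : Num.min e1 e2 <= e1 by rewrite ge_min lexx.
have hle2 : Num.min e1 e2 <= e2 by rewrite ge_min lexx orbT.
rewrite -(h1 s) ?(h2 s) //; apply/andP; split; rewrite /s; lra.
Qed.

Lemma trans_to2 x t v : 0 < t -> lft eta x t v -> v <> st2 -> eta t x = st2 ->
  v = st1 /\ St x t.
Proof.
move=> t0 hv nv2 e2; have [v' [hv' [c1 c2 c3 c4]]] := ev.2 x t t0.
have ee := lft_uniq hv hv'; subst v'.
case: v hv nv2 hv' c1 c2 c3 c4 => // hv _ hv' c1 c2 c3 c4.
- exfalso; have [[_ h]|nh] := pselect (St x t /\ st0 = st1); first by [].
  have [[_ h]|nh2] := pselect (st0 = st0 /\ infect_cond ends Tr eta x t).
    by move: (c3 (conj erefl h)); rewrite e2.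
  by move: (c4 ltac:(by case) nh nh2); rewrite e2.
- split => //; apply: contrapT => nS.
  by move: (c4 ltac:(by case) ltac:(by case) ltac:(by case)); rewrite e2.
Qed.

Lemma trans_from2 x t : 0 < t -> lft eta x t st2 -> eta t x <> st2 ->
  Cr x t /\ eta t x = st0.
Proof.
move=> t0 hv n2; have [v' [hv' [c1 c2 c3 c4]]] := ev.2 x t t0.
have ee := lft_uniq hv hv'; subst v'.
have [hC|nC] := pselect (Cr x t); first by split => //; exact: c1.
by exfalso; apply: n2; apply: c4 => // -[].
Qed.

Lemma trans_from1 x t : 0 < t -> lft eta x t st1 ->
  eta t x = st1 \/ (St x t /\ eta t x = st2).
Proof.
move=> t0 hv; have [v' [hv' [c1 c2 c3 c4]]] := ev.2 x t t0.
have ee := lft_uniq hv hv'; subst v'.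
have [hS|nS] := pselect (St x t); first by right; split => //; exact: c2.
by left; apply: c4 => // -[].
Qed.

Lemma trans_from0 x t : 0 < t -> lft eta x t st0 -> infect_cond ends Tr eta x t ->
  eta t x = st1.
Proof.
move=> t0 hv hi; have [v' [hv' [c1 c2 c3 c4]]] := ev.2 x t t0.
have ee := lft_uniq hv hv'; subst v'.
exact: c3.
Qed.

Lemma lft_ex x t : 0 < t -> exists v, lft eta x t v.
Proof. by move=> t0; have [v [hv _]] := ev.2 x t t0; exists v. Qed.

Lemma jump (S : state -> Prop) x a b : 0 <= a -> a < b -> ~ S (eta a x) -> S (eta b x) ->
  exists c, [/\ a < c <= b, (exists2 v, lft eta x c v & ~ S v), S (eta c x) &
     forall u, c <= u <= b -> S (eta u x)].
Proof.
move=> a0 ab nSa Sb.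
pose B := [set s | a <= s <= b /\ ~ S (eta s x)].
have Ba : B a by split => //; rewrite lexx ltW.
have hB : has_sup B by split; [exists a|exists b => s [/andP[_ ?] _]].
set c := sup B.
have ac : a <= c by apply: (ub_le_sup hB.2).
have cb : c <= b by apply: ge_sup; [exists a|move=> s [/andP[_ ?] _]].
have after : forall u, c < u <= b -> S (eta u x).
  move=> u /andP[cu ub]; apply: contrapT => nS.
  have : u <= c.
    by apply: (ub_le_sup hB.2); split => //; rewrite ub andbT; exact: le_trans ac (ltW cu).
  by rewrite leNgt cu.
have Sc : S (eta c x).
  apply: contrapT => nSc.
  have cb' : c < b by rewrite lt_neqAle cb andbT; apply/eqP => eb; apply: nSc; rewrite eb.
  have [ep ep0 hep] := ev.1 x c (le_trans a0 ac).
  pose u := c + Num.min ep (b - c) / 2.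
  have hm : 0 < Num.min ep (b - c) by rewrite lt_min ep0 subr_gt0 cb'.
  have hle1 : Num.min ep (b - c) <= ep by rewrite ge_min lexx.
  have hle2 : Num.min ep (b - c) <= b - c by rewrite ge_min lexx orbT.
  have := after u; rewrite (hep u); last by apply/andP; split; rewrite /u; lra.
  by move=> h; apply: nSc; apply: h; apply/andP; split; rewrite /u; lra.
have ac' : a < c by rewrite lt_neqAle ac andbT; apply/eqP => ea; apply: nSa; rewrite ea.
have [v hv] := lft_ex x (le_lt_trans a0 ac').
exists c; split => //.
- by rewrite ac' cb.
- exists v => // Sv; case: hv => ep ep0 hep.
  have [s Bs cs] := sup_adherent ep0 hB.
  have sc : s < c.
    rewrite lt_neqAle; apply/andP; split.
      by apply/eqP => es; case: Bs => _; rewrite es.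
    by apply: (ub_le_sup hB.2).
  by case: Bs => _; apply; rewrite hep // cs sc.
- move=> u /andP[cu ub]; have [<-|cu'] := eqVneq c u; first by [].
  by apply: after; rewrite ub andbT lt_neqAle cu' cu.
Qed.
End Dyn.

Lemma closed_away (R : realType) (S : set R) q : closed S -> ~ S q ->
  exists2 e : R, 0 < e & forall u, `|q - u| < e -> ~ S u.
Proof.
move=> cS nSq.
have : open (~` S) by rewrite openC.
move=> /(_ q nSq) /nbhs_ballP [e /= e0 he].
by exists e => // u hu; apply: he; rewrite /ball /=.
Qed.

Section Reg.
Variables (R : realType) (V E : Type) (Rg : set ((V + E) * R)).
Hypothesis hR : closure_of_open Rg.

Lemma reg_closed a : closed [set t | Rg (a, t)].
Proof.
case: hR => O [_ hO].
have -> : [set t | Rg (a, t)] = closure (O a `&` [set u | 0 <= u]).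
  by apply/seteqP; split => t /=; rewrite hO.
exact: closed_closure.
Qed.

Lemma reg_ge0 a t : Rg (a, t) -> 0 <= t.
Proof.
case: hR => O [_ hO]; rewrite hO => h.
have : closure [set u : R | 0 <= u] t by apply: (closureS _ h) => u [].
by rewrite -(proj1 (closure_id _) (@closed_ge R 0)).
Qed.

Lemma exists_base a q t : q < t -> ~ Rg (a, q) -> Rg (a, t) ->
  exists b, [/\ q < b <= t & in_base Rg a b].
Proof.
move=> qt nq Rt.
have [e e0 he] := closed_away (@reg_closed a) nq.
pose I := [set u | q <= u <= t /\ Rg (a, u)].
have It : I t by split => //; rewrite ltW // lexx.
have lbI : lbound I (q + e).
  move=> u [/andP[qu _] Ru]; rewrite leNgt; apply/negP => ue.
  by apply: (he u) => //; rewrite ler0_norm ?subr_le0 //; lra.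
have hlI : has_lbound I by exists (q + e).
set b := inf I.
have qb : q + e <= b by apply: lb_le_inf => //; exists t.
have bt : b <= t by apply: (ge_inf hlI).
have Rb : Rg (a, b).
  apply: contrapT => nb; have [e' e'0 he'] := closed_away (@reg_closed a) nb.
  have [u Iu ub] := inf_adherent e'0 (conj (ex_intro _ t It) hlI).
  have bu : b <= u by apply: (ge_inf hlI).
  apply: (he' u); last by case: Iu.
  by rewrite ler0_norm ?subr_le0 //; lra.
exists b; split; first by apply/andP; split => //; lra.
split => //; exists (b - q); first by rewrite subr_gt0; lra.
move=> dl /andP[dl0 dle] Rd.
have : b <= b - dl by apply: (ge_inf hlI); split => //; apply/andP; split; lra.
lra.
Qed.
End Reg.

Section Part1.
Variables (R : realType) (V E : Type) (ends : E -> V * V).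
Variables (Cr St : V -> set R) (Tr : E -> set R) (eta : R -> V -> state).
Variable (Rg : set ((V + E) * R)).
Hypothesis ev : evolves ends Cr St Tr eta.
Hypothesis hR : closure_of_open Rg.
Hypothesis hon : onset_ordered Cr St Rg.
Hypothesis hgood : good eta Rg.

Definition Eend (x : V) (q : R) :=
  sup [set u | q <= u /\ forall v, q <= v <= u -> Rg (inl x, v)].

Hypothesis Hs1 : forall x y t, x <> y -> Rg (inl x, t) -> Rg (inl y, t) ->
  St x t -> St y t -> False.
Hypothesis Hs2 : forall x y t (q : rat), Rg (inl x, t) -> Rg (inl y, t) ->
  t = Eend x (ratr q) -> St y t -> False.

Lemma trans_cr x t : 0 < t -> lft eta x t st2 -> Cr x t -> eta t x = st0.
Proof.
move=> t0 hv hc; have [v' [hv' [c1 c2 c3 c4]]] := ev.2 x t t0.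
have ee := lft_uniq hv hv'; subst v'; exact: c1.
Qed.

Lemma star_back z t : Rg (inl z, t) -> eta t z = st2 ->
  exists s, [/\ 0 < s <= t, St z s, lft eta z s st1 &
    forall u, s <= u <= t -> eta u z = st2 /\ Rg (inl z, u)].
Proof.
move=> Rt e2.
have n1 : ~ Rg (inl z, -1) by move/(reg_ge0 hR); rewrite lerNr oppr0 ler10.
have t0 := reg_ge0 hR Rt.
have m1t : -1 < t by lra.
have [b [/andP[b1 bt] hb]] := exists_base hR m1t n1 Rt.
have b0 := reg_ge0 hR hb.1.
have nb2 := hgood hb.
have bt' : b < t by rewrite lt_neqAle bt andbT; apply/eqP => eb; apply: nb2; rewrite eb.
have [c [/andP[bc ct] [v hv nv2] ec h2]] :=
  @jump R V E ends Cr St Tr eta ev (fun s => s = st2) z b t b0 bt' nb2 e2.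
have c0 : 0 < c by lra.
have [v1 Sc] := trans_to2 ev c0 hv nv2 ec; subst v.
exists c; split => //; first by rewrite c0.
move=> u hu; split; first exact: h2.
apply: contrapT => nu.
have ut : u < t.
  rewrite lt_neqAle; case/andP: hu => _ ->; rewrite andbT.
  by apply/eqP => eu; apply: nu; rewrite eu.
have [b' [/andP[ub' b't] hb']] := exists_base hR ut nu Rt.
apply: (hgood hb'); apply: h2; apply/andP; split => //.
by case/andP: hu => cu _; lra.
Qed.

Lemma part1_asym x y t sx sy : x <> y ->
  [/\ 0 < sx <= t, St x sx, lft eta x sx st1 &
    forall u, sx <= u <= t -> eta u x = st2 /\ Rg (inl x, u)] ->
  [/\ 0 < sy <= t, St y sy, lft eta y sy st1 &
    forall u, sy <= u <= t -> eta u y = st2 /\ Rg (inl y, u)] ->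
  sx <= sy -> False.
Proof.
move=> xy [/andP[sx0 sxt] Sx _ hx] [/andP[sy0 syt] Sy _ hy] sxy.
have [esx|nsx] := eqVneq sx sy.
  subst sy; apply: (Hs1 xy _ _ Sx Sy).
  - by case: (hx sx) => //; rewrite lexx sxt.
  - by case: (hy sx) => //; rewrite lexx sxt.
have sxy' : sx < sy by rewrite lt_neqAle nsx sxy.
have Rysy : Rg (inl y, sy) by case: (hy sy) => //; rewrite lexx syt.
have Rxsy : Rg (inl x, sy) by case: (hx sy) => //; rewrite (ltW sxy') syt.
have [t' [syt' ht']] : exists t', sy < t' /\ forall u, sx < u < t' -> Rg (inl x, u).
  have [syt''|esyt] := ltP sy t.
    exists t; split => // u /andP[a b]; case: (hx u) => //; rewrite ltW // ltW //.
  have esy : sy = t by apply/eqP; rewrite eq_le syt esyt.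
  subst sy.
  have [q] := rat_in_itvoo sxy'; rewrite in_itv /= => /andP[sxq qt].
  pose I := [set u | ratr q <= u /\ forall v, ratr q <= v <= u -> Rg (inl x, v)].
  have It : I t.
    split; first exact: ltW.
    by move=> v /andP[qv vt]; case: (hx v) => //; rewrite vt (le_trans (ltW sxq) qv).
  have [[u Iu tu]|nu] := pselect (exists2 u, I u & t < u).
    exists u; split => // w /andP[sxw wu].
    have [wq|qw] := ltP w (ratr q).
      by case: (hx w) => //; rewrite (ltW sxw) (le_trans (ltW wq) (ltW qt)).
    by case: Iu => _; apply; rewrite qw ltW.
  exfalso; apply: (Hs2 (x:=x) (y:=y) (t:=t) (q:=q) Rxsy Rysy _ Sy).
  apply/eqP; rewrite eq_le; apply/andP; split.
    apply: (ub_le_sup (E := I)) => //; exists t => w Iw.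
    by rewrite leNgt; apply/negP => tw; apply: nu; exists w.
  apply: ge_sup; first by exists t.
  by move=> w Iw; rewrite leNgt; apply/negP => tw; apply: nu; exists w.
have Rxsx : Rg (inl x, sx) by case: (hx sx) => //; rewrite lexx sxt.
have [s' /andP[sxs' s'sy] Cs'] :=
  hon Sx Rxsx (lt_trans sxy' syt') (fun u hu => ht' u hu) Sy Rysy
    (ltac:(by rewrite sxy' syt')).
have s'0 : 0 < s' by lra.
have l2 : lft eta x s' st2.
  exists (s' - sx); first by rewrite subr_gt0.
  move=> w /andP[a b]; case: (hx w) => //; apply/andP; split; lra.
have := trans_cr s'0 l2 Cs'.
by case: (hx s') => [|->//]; apply/andP; split; lra.
Qed.

Lemma part1 t x y : Rg (inl x, t) -> Rg (inl y, t) ->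
  eta t x = st2 -> eta t y = st2 -> x = y.
Proof.
move=> Rx Ry ex ey; apply: contrapT => xy.
have [sx hx] := star_back Rx ex.
have [sy hy] := star_back Ry ey.
have [le|le] := leP sx sy.
  exact: part1_asym xy hx hy le.
by apply: part1_asym (nesym xy) hy hx (ltW le).
Qed.
End Part1.

Section Part2.
Variables (R : realType) (V E : Type) (ends : E -> V * V).
Variables (Cr St : V -> set R) (Tr : E -> set R) (eta : R -> V -> state).
Variable (Rg : set ((V + E) * R)).
Hypothesis ev : evolves ends Cr St Tr eta.
Hypothesis hR : closure_of_open Rg.

Lemma trans_st x t : 0 < t -> lft eta x t st1 -> St x t -> eta t x = st2.
Proof.
move=> t0 hv hc; have [v' [hv' [c1 c2 c3 c4]]] := ev.2 x t t0.
have ee := lft_uniq hv hv'; subst v'; exact: c2.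
Qed.

Lemma seg_closure a s t : s < t -> (forall u, s < u < t -> Rg (a, u)) ->
  Rg (a, s) /\ Rg (a, t).
Proof.
move=> st h; split; apply: contrapT => n.
- have [e e0 he] := closed_away (@reg_closed R V E Rg hR a) n.
  pose m := Num.min e (t - s) / 2.
  have hm : 0 < Num.min e (t - s) by rewrite lt_min e0 subr_gt0 st.
  have h1 : Num.min e (t - s) <= e by rewrite ge_min lexx.
  have h2 : Num.min e (t - s) <= t - s by rewrite ge_min lexx orbT.
  apply: (he (s + m)); last by apply: h; apply/andP; split; rewrite /m; lra.
  rewrite /m ler0_norm; lra.
- have [e e0 he] := closed_away (@reg_closed R V E Rg hR a) n.
  pose m := Num.min e (t - s) / 2.
  have hm : 0 < Num.min e (t - s) by rewrite lt_min e0 subr_gt0 st.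
  have h1 : Num.min e (t - s) <= e by rewrite ge_min lexx.
  have h2 : Num.min e (t - s) <= t - s by rewrite ge_min lexx orbT.
  apply: (he (t - m)); last by apply: h; apply/andP; split; rewrite /m; lra.
  rewrite /m ger0_norm; lra.
Qed.

Lemma lft_pick x t v s : lft eta x t v -> s < t -> exists2 w, s < w < t & eta w x = v.
Proof.
move=> [ep ep0 hep] st.
pose m := Num.min ep (t - s) / 2.
have hm : 0 < Num.min ep (t - s) by rewrite lt_min ep0 subr_gt0 st.
have h1 : Num.min ep (t - s) <= ep by rewrite ge_min lexx.
have h2 : Num.min ep (t - s) <= t - s by rewrite ge_min lexx orbT.
exists (t - m); first by apply/andP; split; rewrite /m; lra.
by apply: hep; apply/andP; split; rewrite /m; lra.
Qed.

Lemma seg_nz x s t : 0 <= s -> eta s x = st1 ->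
  (forall c' c, s < c' -> c' < c -> c < t -> St x c' -> Cr x c -> False) ->
  forall w, s < w < t -> eta w x <> st0.
Proof.
move=> s0 e1 hsc w /andP[sw wt] e0.
have [c [/andP[sc cw] [v hv nv0] ec0 _]] :=
  @jump R V E ends Cr St Tr eta ev (fun s => s = st0) x s w s0 sw ltac:(by rewrite e1) e0.
have c0 : 0 < c by lra.
have v2 : v = st2.
  case: v hv nv0 => // hv _.
  by case: (trans_from1 ev c0 hv) => [|[_]]; rewrite ec0.
subst v.
have [Cc _] := trans_from2 ev c0 hv ltac:(by rewrite ec0).
have [w' /andP[sw' w'c] ew'] := lft_pick hv sc.
have s0' : 0 <= s by [].
have [c' [/andP[sc' c'w'] [v' hv' nv'] ec' _]] :=
  @jump R V E ends Cr St Tr eta ev (fun s => s = st2) x s w' s0 sw' ltac:(by rewrite e1) ew'.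
have c'0 : 0 < c' by lra.
have [_ Sc'] := trans_to2 ev c'0 hv' nv' ec'.
by apply: (hsc c' c) => //; lra.
Qed.

Lemma seg_inner x s t u : 0 <= s -> eta s x = st1 -> s < u < t -> St x u ->
  (forall w, s < w < u -> ~ St x w) -> (forall w, u < w < t -> ~ Cr x w) ->
  ~ Cr x t ->
  [/\ (forall w, s < w < t -> eta w x <> st0), lft eta x t st2 & eta t x = st2].
Proof.
move=> s0 e1 /andP[su ut] Su nS nC nCt.
have nz : forall w, s < w < t -> eta w x <> st0.
  apply: seg_nz => // c' c sc' c'c ct Sc' Cc.
  have [c'u|uc'] := ltP c' u; first by apply: (nS c') => //; rewrite sc'.
  by apply: (nC c) => //; apply/andP; split; lra.
have u0 : 0 < u by lra.
have eu : eta u x = st2.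
  have [v hv] := lft_ex ev x u0.
  have [w /andP[sw wu] ew] := lft_pick hv su.
  case: v hv ew => hv ew.
  - by exfalso; apply: (nz w) => //; apply/andP; split; lra.
  - exact: trans_st u0 hv Su.
  - apply: contrapT => n2; have [_ h0] := trans_from2 ev u0 hv n2.
    by apply: (nz u) => //; rewrite su ut.
have on2 : forall w, u <= w < t -> eta w x = st2.
  move=> w /andP[uw wt]; apply: contrapT => n2.
  have [euw|uw'] := eqVneq u w; first by subst w.
  have uw'' : u < w by rewrite lt_neqAle uw' uw.
  have [c [/andP[uc cw] [v hv nv] ec _]] :=
    @jump R V E ends Cr St Tr eta ev (fun s => s <> st2) x u w (ltW u0) uw''
      ltac:(by rewrite eu) n2.
  have c0 : 0 < c by lra.
  have v2 : v = st2 by apply: contrapT.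
  subst v; have [Cc _] := trans_from2 ev c0 hv ec.
  by apply: (nC c) => //; apply/andP; split; lra.
have l2 : lft eta x t st2.
  exists (t - u); first by rewrite subr_gt0.
  by move=> w /andP[a b]; apply: on2; apply/andP; split; lra.
split => //; apply: contrapT => n2.
by have [] := trans_from2 ev (lt_trans u0 ut) l2 n2.
Qed.

Lemma seg_last x s t : 0 <= s -> eta s x = st1 ->
  (forall u, s < u < t -> St x u -> forall w, u < w < t -> ~ Cr x w) ->
  forall w, s < w < t -> eta w x <> st0.
Proof.
move=> s0 e1 h; apply: seg_nz => // c' c sc' c'c ct Sc' Cc.
by apply: (h c' _ Sc' c) => //; apply/andP; split; lra.
Qed.
End Part2.

Section Paths.
Variables (R : realType) (V E : Type) (ends : E -> V * V).
Variables (Cr St : V -> set R) (Tr : E -> set R) (eta : R -> V -> state).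
Variable (Rg : set ((V + E) * R)).
Hypothesis ev : evolves ends Cr St Tr eta.
Hypothesis hR : closure_of_open Rg.
Hypothesis hsimple : forall e, (ends e).1 <> (ends e).2.
Hypothesis Hp1 : forall t x y, Rg (inl x, t) -> Rg (inl y, t) ->
  eta t x = st2 -> eta t y = st2 -> x = y.
Hypothesis Hh : forall e x t, Rg (inl x, t) -> incident ends e x -> Tr e t ->
  ~ Cr x t /\ ~ St x t.

Lemma hop x y e t : 0 < t -> joins ends e x y -> Tr e t ->
  Rg (inl x, t) -> Rg (inl y, t) -> lft eta x t st2 -> eta t x = st2 ->
  eta t y = st1.
Proof.
move=> t0 je Te Rx Ry l2 ex.
have iy : incident ends e y by rewrite /incident; case: je => ->; [right|left].
have [nC nS] := Hh Ry iy Te.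
have [v hv] := lft_ex ev y t0.
case: v hv => hv.
- apply: (trans_from0 ev t0 hv); exists e, x; split => //.
  by rewrite /joins; case: je; [right|left].
- by case: (trans_from1 ev t0 hv) => // -[].
- exfalso; have ey : eta t y = st2.
    by apply: contrapT => n2; have [] := trans_from2 ev t0 hv n2.
  have xy := Hp1 Rx Ry ex ey; subst y.
  by have := @hsimple e; case: je => -> /=.
Qed.

Lemma segs_head (y : V) (t : R) (hs : seq (R * E * V)) (tend : R) : exists t'',
  rcons (inner_segs y t hs) (last_seg y t hs tend) =
  (y, t, t'') :: behead (rcons (inner_segs y t hs) (last_seg y t hs tend)).
Proof. by case: hs => [|[[t1 e1] y1] hs] /=; eexists. Qed.

Lemma path_main (hs : seq (R * E * V)) (x : V) (s tend : R) : 0 <= s -> eta s x = st1 ->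
  Defs.allP (fun '(x, s, t) => s < t) (rcons (inner_segs x s hs) (last_seg x s hs tend)) ->
  Defs.allP (fun '(x, t, e, y) => joins ends e x y) (hopsx x hs) ->
  Defs.allP (fun '(x, t, e, y) => Tr e t) (hopsx x hs) ->
  Defs.allP (fun '(x, s, t) => exists u, [/\ s < u < t, St x u,
              (forall w, s < w < u -> ~ St x w) &
              (forall w, u < w < t -> ~ Cr x w)]) (inner_segs x s hs) ->
  (let '(x, s, t) := last_seg x s hs tend in
       forall u, s < u < t -> St x u -> forall w, u < w < t -> ~ Cr x w) ->
  Defs.allP (fun '(x, s, t) => forall u, s < u < t -> Rg (inl x, u))
     (rcons (inner_segs x s hs) (last_seg x s hs tend)) ->
  Defs.allP (fun '(x, t, e, y) => [/\ eta t x = st2, eta t y = st1 & Tr e t]) (hopsx x hs) /\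
  Defs.allP (fun '(x, s, t) => forall u, s < u < t -> eta u x <> st0)
     (rcons (inner_segs x s hs) (last_seg x s hs tend)).
Proof.
elim: hs x s => [|[[t e] y] hs IH] x s s0 e1 /=.
  by move=> [st _] _ _ _ hl _; split => //; split => //; exact: (seg_last ev s0 e1 hl).
move=> [st wf] [jxy js] [Te Ts] [[u [hu Su nS nC]] hi] hl [Rxs Rs].
have [Rx _] := seg_closure hR st Rxs.
have [_ Rxt] := seg_closure hR st Rxs.
have ix : incident ends e x by rewrite /incident; case: jxy => ->; [left|right].
have [nCt _] := Hh Rxt ix Te.
have [nz l2 ex] := seg_inner ev s0 e1 hu Su nS nC nCt.
have [t'' eh] := segs_head y t hs tend.
move: wf Rs; rewrite eh /= => -[tt'' wf'] [Ryt'' Rs'].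
have [Ryt _] := seg_closure hR tt'' Ryt''.
have t0 : 0 < t by lra.
have ey := hop t0 jxy Te Rxt Ryt l2 ex.
have := IH y t (ltW t0) ey; rewrite eh /= => /(_ (conj tt'' wf') js Ts hi hl (conj Ryt'' Rs')).
by move=> [h1 [h2 h3]]; split; split.
Qed.

Lemma part2 (p : spath R V E) : wf_path ends p -> pot_active Cr St Tr p -> path_in Rg p ->
  eta (p_t0 p) (p_x p) = st1 -> active Tr eta p.
Proof.
case: p => x s hs tend [wf1 wf2] [pa1 pa2 pa3] [pi1 pi2] /= e1.
rewrite /active /p_hopsx /p_segs /p_inner /p_last /=.
have s0 : 0 <= s.
  have [t'' eh] := segs_head x s hs tend.
  move: wf1 pi1; rewrite /p_segs /p_inner /p_last /= eh /= => -[st _] [Rs _].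
  by have [/(reg_ge0 hR)] := seg_closure hR st Rs.
exact: path_main.
Qed.
End Paths.

Section AllP.
Lemma allP_cat (T : Type) (Q : T -> Prop) s1 s2 :
  Defs.allP Q (s1 ++ s2) <-> Defs.allP Q s1 /\ Defs.allP Q s2.
Proof. by elim: s1 => [|x s IH] /=; [tauto|rewrite IH; tauto]. Qed.

Lemma allP_impl (T : Type) (Q Q' : T -> Prop) s :
  (forall x, Q x -> Q' x) -> Defs.allP Q s -> Defs.allP Q' s.
Proof. by move=> h; elim: s => //= x s IH [/h ? /IH ?]. Qed.

Lemma allP_nth (T : Type) (Q : T -> Prop) (x0 : T) s :
  Defs.allP Q s <-> forall i, (i < size s)%N -> Q (nth x0 s i).
Proof.
elim: s => [|x s IH] /=; first by split.
rewrite IH; split => [[hx hs] [|i] //= /hs //|h]; split; first exact: (h 0%N).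
by move=> i hi; apply: (h i.+1).
Qed.
End AllP.

Section Prob.
Variables (R : realType) (V E : Type) (d : measure_display) (Omega : measurableType d)
  (P : probability Omega R) (N : Omega -> lab V E -> set R) (rate : lab V E -> R).
Hypothesis hind : indep_poisson P N rate.

Definition ent := (lab V E * R * R * nat)%type.
Definition cnt w (e : ent) := count_is (N w e.1.1.1) e.1.1.2 e.1.2 e.2.
Definition Ev (l : seq ent) := [set w | Defs.allP (cnt w) l].
Definition pr (l : seq ent) :=
  \prod_(e <- l) Defs.poisson_prob (rate e.1.1.1 * (e.1.2 - e.1.1.2)) e.2.
Definition compat (e e' : ent) :=
  e.1.1.1 = e'.1.1.1 -> e.1.2 <= e'.1.1.2 \/ e'.1.2 <= e.1.1.2.
Fixpoint pw (l : seq ent) :=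
  match l with [::] => True | e :: l' => Defs.allP (compat e) l' /\ pw l' end.
Definition valid l := Defs.allP (fun e : ent => 0 <= e.1.1.2 <= e.1.2) l /\ pw l.

Lemma pw_nth e0 l i j : pw l -> (i < j)%N -> (j < size l)%N ->
  compat (nth e0 l i) (nth e0 l j).
Proof.
elim: l i j => [|e l IH] [|i] [|j] //= [h1 h2] ij jl.
- by move: h1; rewrite (allP_nth _ e0) => /(_ j jl).
- exact: IH.
Qed.

Lemma pw_cat l1 l2 : pw (l1 ++ l2) <-> [/\ pw l1, pw l2 &
  Defs.allP (fun e => Defs.allP (compat e) l2) l1].
Proof.
elim: l1 => [|e l1 IH] /=; first by split => [h|[]] //; split.
rewrite allP_cat IH; split.
  by move=> [[h1 h2] [h3 h4 h5]]; split.
by move=> [[h1 h3] h4 [h2 h5]]; split.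
Qed.

Lemma valid_drop l1 l2 l3 : valid (l1 ++ l2 ++ l3) -> valid (l1 ++ l3).
Proof.
rewrite /valid !allP_cat => -[[h1 [h2 h3]] /pw_cat[p1 /pw_cat[p2 p3 p23] p13]].
split; first by split.
apply/pw_cat; split => //; apply: allP_impl p13 => e; rewrite allP_cat; tauto.
Qed.

Lemma EvE l1 l2 : Ev (l1 ++ l2) = Ev l1 `&` Ev l2.
Proof. by apply/seteqP; split => w /=; rewrite /Ev /= allP_cat. Qed.

Lemma Ev_meas l : measurable (Ev l).
Proof.
case: hind => _ hm _.
elim: l => [|e l IH]; first by have -> : Ev [::] = setT by apply/seteqP; split.
have -> : Ev (e :: l) = [set w | cnt w e] `&` Ev l by apply/seteqP; split.
by apply: measurableI => //; apply: hm.
Qed.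

Lemma prob_Ev l : valid l -> P (Ev l) = (pr l)%:E.
Proof.
case: l => [|e0 l] hv.
  have -> : Ev [::] = setT by apply/seteqP; split.
  by rewrite probability_setT /pr big_nil.
case: hind => _ _ hp.
set s := e0 :: l.
pose I (j : 'I_(size s)) := (nth e0 s j).1.1.1.
pose a (j : 'I_(size s)) := (nth e0 s j).1.1.2.
pose b (j : 'I_(size s)) := (nth e0 s j).1.2.
pose k (j : 'I_(size s)) := (nth e0 s j).2.
have h1 : forall j, 0 <= a j <= b j.
  by move=> j; exact: (proj1 (allP_nth _ e0 _) hv.1 j (ltn_ord j)).
have h2 : forall j1 j2, j1 != j2 -> I j1 = I j2 -> b j1 <= a j2 \/ b j2 <= a j1.
  move=> j1 j2 ne; case: hv => _ hpw.
  have [lt|lt] : (j1 < j2)%N \/ (j2 < j1)%N.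
    by case: (ltngtP j1 j2) => //; [left|right|move/val_inj/eqP; rewrite (negbTE ne)].
  - by move/(pw_nth (e0:=e0) hpw lt (ltn_ord j2)).
  - by move=> eI; case: (pw_nth (e0:=e0) hpw lt (ltn_ord j1) (esym eI)) => h; [right|left].
have := hp (size s) I a b k h1 h2.
have -> : [set w | forall j, count_is (N w (I j)) (a j) (b j) (k j)] = Ev s.
  apply/seteqP; split => w h.
    change (Defs.allP (cnt w) s).
    by apply: (proj2 (allP_nth _ e0 _)) => i hi; apply: (h (Ordinal hi)).
  change (Defs.allP (cnt w) s) in h.
  by move=> j; apply: (proj1 (allP_nth _ e0 _) h j (ltn_ord j)).
move=> ->; congr (_%:E).
by rewrite /pr (big_nth e0) big_mkord.
Qed.
End Prob.

Section ProbL.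
Variables (R : realType) (V E : Type) (d : measure_display) (Omega : measurableType d)
  (P : probability Omega R) (N : Omega -> lab V E -> set R) (rate : lab V E -> R).
Hypothesis hind : indep_poisson P N rate.

Lemma probD (A B : set Omega) : measurable A -> measurable B ->
  (P (A `\` B) = P A - P (A `&` B))%E.
Proof.
move=> mA mB; rewrite measureD //.
by rewrite (le_lt_trans (probability_le1 P mA)) // ltry.
Qed.

Definition Neg (ws : seq (seq (ent R V E))) := [set w | Defs.allP (fun l => ~ Ev N l w) ws].

Lemma Neg_meas ws : measurable (Neg ws).
Proof.
elim: ws => [|l ws IH]; first by have -> : Neg [::] = setT by apply/seteqP; split.
have -> : Neg (l :: ws) = ~` Ev N l `&` Neg ws by apply/seteqP; split.
apply: measurableI => //; apply: measurableC; exact: (Ev_meas hind).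
Qed.

Lemma probL l ws : valid (l ++ flatten ws) ->
  P (Ev N l `&` Neg ws) = (pr rate l * \prod_(w <- ws) (1 - pr rate w))%:E.
Proof.
elim: ws l => [|w0 ws IH] l hv.
  have -> : Neg [::] = setT by apply/seteqP; split.
  rewrite setIT (prob_Ev hind); last by move: hv; rewrite /= cats0.
  by rewrite big_nil mulr1.
have e : Ev N l `&` Neg (w0 :: ws) =
   (Ev N l `&` Neg ws) `\` (Ev N (l ++ w0) `&` Neg ws).
  apply/seteqP; split => w /=.
    move=> [El [nw0 Nws]]; split => //; rewrite EvE => -[[_ ?] _]; exact: nw0.
  by move=> [[El Nws] h]; split => //; split => // Ew0; apply: h; split => //; rewrite EvE.
have mA : measurable (Ev N l `&` Neg ws) by apply: measurableI; [exact: (Ev_meas hind)|exact: Neg_meas].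
have mB : measurable (Ev N (l ++ w0) `&` Neg ws) by apply: measurableI; [exact: (Ev_meas hind)|exact: Neg_meas].
rewrite e probD //.
have -> : (Ev N l `&` Neg ws) `&` (Ev N (l ++ w0) `&` Neg ws) = Ev N (l ++ w0) `&` Neg ws.
  by apply/seteqP; split => w /=; [case|rewrite EvE; case=> -[]].
rewrite IH; last first.
  by move: hv => /=; exact: valid_drop.
rewrite IH; last first.
  by rewrite -catA.
rewrite -EFinB; congr (_%:E).
by rewrite /pr big_cat /= big_cons; ring.
Qed.
End ProbL.

Lemma count0_empty (R : realType) (A : set R) a b : count_is A a b 0 ->
  forall t, a < t <= b -> ~ A t.
Proof.
move=> [s [_ hs sz]] t ht At; case: s hs sz => // hs _.
have : (A `&` [set u | a < u <= b]) t by split.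
by rewrite -hs.
Qed.

Lemma count1_ex (R : realType) (A : set R) a b : count_is A a b 1 ->
  exists t, a < t <= b /\ A t.
Proof.
move=> [[|x [|y s]] [_ hs sz]] //.
have : [set` [:: x]] x by rewrite /= inE.
by rewrite hs => -[Ax hx]; exists x.
Qed.

Lemma one_minus_exp (R : realType) (x : R) : 0 <= x -> 0 <= 1 - expR (- x) <= x.
Proof.
move=> x0; apply/andP; split.
  by rewrite subr_ge0 expR_le1 oppr_le0.
have := expR_ge1Dx (- x); lra.
Qed.

Lemma step_find (R : realType) (f : nat -> R) t n : f 0%N < t -> t <= f n ->
  exists k, (k < n)%N /\ f k < t <= f k.+1.
Proof.
elim: n => [|n IH] h0 hn; first by move: hn; rewrite leNgt h0.
have [tn|nt] := leP t (f n).
  by have [k [kn hk]] := IH h0 tn; exists k; split => //; apply: ltnW.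
by exists n; split => //; rewrite nt hn.
Qed.

Section ProbApp.
Variables (R : realType) (V E : Type) (d : measure_display) (Omega : measurableType d)
  (P : probability Omega R) (N : Omega -> lab V E -> set R) (rate : lab V E -> R).
Hypothesis hind : indep_poisson P N rate.
Hypothesis rpos : forall i, 0 < rate i.

Lemma small_negl (X : set Omega) (C : R) :
  (forall n : nat, exists A, [/\ measurable A, X `<=` A & (P A <= (C / n.+1%:R)%:E)%E]) ->
  P.-negligible X.
Proof.
move=> h; have [A hA] := choice h.
exists (\bigcap_n A n); split.
- by apply: bigcapT_measurable => n; case: (hA n).
- pose r := fine (P (\bigcap_n A n)).
  have mB : measurable (\bigcap_n A n) by apply: bigcapT_measurable => n; case: (hA n).
  have le n : (P (\bigcap_n A n) <= (C / n.+1%:R)%:E)%E.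
    case: (hA n) => mAn _ hn; apply: le_trans hn.
    by apply: le_measure; rewrite ?inE //; exact: bigcap_inf.
  have f0 : (0 <= P (\bigcap_n A n))%E by exact: measure_ge0.
  have fin : P (\bigcap_n A n) \is a fin_num.
    by rewrite ge0_fin_numE // (le_lt_trans (probability_le1 P mB)) // ltry.
  have le' n : fine (P (\bigcap_n A n)) <= C / n.+1%:R by rewrite -lee_fin (fineK fin).
  have f0' : 0 <= fine (P (\bigcap_n A n)) by exact: fine_ge0.
  rewrite -(fineK fin); congr (_%:E); apply/eqP; rewrite eq_le f0' andbT; apply/negP => /negP.
  rewrite -ltNge => rp.
  have C0 : 0 <= C by have := le' 0%N; rewrite divr1; lra.
  set r' := fine _ in rp le'.
  have := archi_boundP (divr_ge0 C0 (ltW rp)); set m := Num.bound _ => hm.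
  have := le' m; rewrite ler_pdivlMr ?ltr0n // => hle.
  have : C < r' * m%:R by rewrite mulrC -ltr_pdivrMr.
  have : r' * m%:R <= r' * m.+1%:R by rewrite ler_pM2l // ler_nat.
  lra.
- by apply: sub_bigcap => n _; case: (hA n).
Qed.

Lemma pr_zero i a b : pr rate [:: (i, a, b, 0%N)] = expR (- (rate i * (b - a))).
Proof. by rewrite /pr big_cons big_nil /Defs.poisson_prob /= expr0 mulr1 divr1 mulr1. Qed.

Lemma fixed_time i tau : P.-negligible [set w | N w i tau].
Proof.
have [t0|t0] := leP tau 0.
  apply: (negligibleS _ (negligible_set0 P)) => w /= Nt.
  by case: hind => hpos _ _; have := hpos w i tau Nt; rewrite /=; lra.
apply: (@small_negl _ (rate i * tau)) => n.
set h := tau / n.+1%:R.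
have h0 : 0 < h by rewrite divr_gt0.
have htau : h <= tau by rewrite ler_pdivrMr ?ltr0n // ler_peMr ?ler1n // ltW.
exists (Ev N [::] `&` Neg N [:: [:: (i, tau - h, tau, 0%N)]]); split.
- by apply: measurableI; [exact: (Ev_meas hind)|exact: (Neg_meas hind)].
- move=> w Nt; split => //; split => // hc.
  by apply: (count0_empty hc.1 (t := tau)) => //; rewrite /=; apply/andP; split; lra.
- rewrite (probL hind); last first.
    by split => //=; split => //; apply/andP; split; lra.
  rewrite big_cons big_nil mulr1 lee_fin pr_zero.
  have -> : pr rate [::] = 1 by rewrite /pr big_nil.
  rewrite mul1r.
  have := one_minus_exp (ltW (mulr_gt0 (rpos i) h0)).
  have -> : tau - (tau - h) = h by lra.
  by rewrite /h mulrA => /andP[_ ->].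
Qed.
End ProbApp.

Section ProbApp2.
Variables (R : realType) (V E : Type) (d : measure_display) (Omega : measurableType d)
  (P : probability Omega R) (N : Omega -> lab V E -> set R) (rate : lab V E -> R).
Hypothesis hind : indep_poisson P N rate.
Hypothesis rpos : forall i, 0 < rate i.

Lemma two_labels_T i j (T : R) : i <> j -> 0 < T ->
  P.-negligible [set w | exists t, [/\ 0 < t <= T, N w i t & N w j t]].
Proof.
move=> ij T0.
apply: (small_negl (P := P) (C := rate i * rate j * T ^+ 2)) => n.
set h := T / n.+1%:R.
have h0 : 0 < h by rewrite divr_gt0.
pose F k := Ev N [::] `&` Neg N [:: [:: (i, k%:R * h, k.+1%:R * h, 0%N)];
                                     [:: (j, k%:R * h, k.+1%:R * h, 0%N)]].
have mF k : measurable (F k) by apply: measurableI; [exact: (Ev_meas hind)|exact: (Neg_meas hind)].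
have hF k : (P (F k) <= (rate i * h * (rate j * h))%:E)%E.
  rewrite /F (probL hind); last first.
    split => /=; last by split => //; split => // /ij.
    have : 0 <= k%:R * h by rewrite mulr_ge0 // ltW.
    by split => //; [apply/andP; split|split => //; apply/andP; split];
      rewrite // ler_pM2r // ler_nat.
  rewrite !big_cons big_nil !pr_zero.
  have -> : pr rate [::] = 1 by rewrite /pr big_nil.
  have -> : k.+1%:R * h - k%:R * h = h by rewrite -mulrBl -natrB // subSnn mul1r.
  rewrite mul1r mulr1 lee_fin.
  have /andP[a1 a2] := one_minus_exp (ltW (mulr_gt0 (rpos i) h0)).
  have /andP[b1 b2] := one_minus_exp (ltW (mulr_gt0 (rpos j) h0)).
  exact: ler_pM.
exists (\big[setU/set0]_(k < n.+1) F k); split.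
- by apply: bigsetU_measurable => k _.
- move=> w [t [/andP[t0 tT] Ni Nj]].
  have [k [kn /andP[hk1 hk2]]] := @step_find R (fun k => k%:R * h) t n.+1
    ltac:(by rewrite /= mul0r) ltac:(by rewrite /= /h mulrC divfK // pnatr_eq0).
  rewrite -bigcup_mkord; exists k => //; split => //.
  split; first by move=> [hc _]; apply: (count0_empty hc (t := t)) => //; rewrite /=; apply/andP; split.
  by split => //; move=> [hc _]; apply: (count0_empty hc (t := t)) => //; rewrite /=; apply/andP; split.
- apply: le_trans.
    apply: (content_subadditive P); try (by move=> k _; exact: mF);
      try (by apply: bigsetU_measurable => k _); try exact: subset_refl.
  apply: le_trans; first by apply: lee_sum => k _; exact: hF.
  rewrite sumEFin lee_fin big_const_ord iter_addr addr0 -mulr_natr.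
  rewrite /h; apply: le_trans (le_refl _) _.
  have n0 : (n.+1%:R : R) != 0 by rewrite pnatr_eq0.
  by rewrite le_eqVlt; apply/orP; left; apply/eqP; field.
Qed.
End ProbApp2.

Section ProbApp3.
Variables (R : realType) (V E : Type) (d : measure_display) (Omega : measurableType d)
  (P : probability Omega R) (N : Omega -> lab V E -> set R) (rate : lab V E -> R).
Hypothesis hind : indep_poisson P N rate.
Hypothesis rpos : forall i, 0 < rate i.

Lemma two_labels i j : i <> j ->
  P.-negligible [set w | exists t, N w i t /\ N w j t].
Proof.
move=> ij.
apply: (negligibleS _ (negligible_bigcup (fun T : nat =>
  two_labels_T hind rpos (T := T.+1%:R) ij (ltr0Sn _ _)))).
move=> w [t [Ni Nj]].
have t0 : 0 < t by case: hind => hpos _ _; exact: hpos w i t Ni.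
exists (Num.bound t) => //; exists t; split => //.
rewrite t0 /=; have := archi_boundP (ltW t0).
by move/ltW/le_trans; apply; rewrite ler_nat.
Qed.
End ProbApp3.

From Stdlib Require Import Lia.
From mathcomp Require Import zify.
Lemma geom_bound (R : realType) (p : R) n : 0 < p <= 1 ->
  (1 - p) ^+ n <= p^-1 / n.+1%:R.
Proof.
move=> /andP[p0 p1].
have h : (1 - p) ^+ n * (1 + n%:R * p) <= 1.
  elim: n => [|n IH]; first by rewrite expr0 mul0r addr0 mulr1.
  have g0 : 0 <= (1 - p) ^+ n by apply: exprn_ge0; lra.
  rewrite exprSr -mulrA; apply: le_trans IH.
  apply: ler_wpM2l => //.
  have x0 : 0 <= n%:R :> R by [].
  rewrite -natr1; nra.
have g0 : 0 <= (1 - p) ^+ n by apply: exprn_ge0; lra.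
have key : (1 - p) ^+ n * (p * n.+1%:R) <= 1.
  apply: le_trans h; apply: ler_wpM2l => //.
  have x0 : 0 <= n%:R :> R by [].
  rewrite -natr1; nra.
have -> : p^-1 / n.+1%:R = 1 / (p * n.+1%:R).
  have pn : (n.+1%:R : R) != 0 by rewrite pnatr_eq0.
  by field; apply/andP; split => //; apply/eqP; lra.
by rewrite ler_pdivlMr // mulr_gt0.
Qed.

Section Unc.
Variables (R : realType) (V E : Type) (d : measure_display) (Omega : measurableType d)
  (P : probability Omega R) (N : Omega -> lab V E -> set R) (rate : lab V E -> R).
Hypothesis hind : indep_poisson P N rate.
Variables (rS rC : R).
Hypothesis hrS : forall x, rate (LStar E x) = rS.
Hypothesis hrC : forall x, rate (LCross E x) = rC.
Hypothesis rS0 : 0 < rS.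
Hypothesis rC0 : 0 < rC.
Variable (Rg : set ((V + E) * R)).
Variables (y : nat -> V) (q1 q2 : R).
Hypothesis yinj : injective y.
Hypothesis q0 : 0 <= q1.
Hypothesis q12 : q1 < q2.
Hypothesis hy : forall n u, q1 <= u <= q2 -> Rg (inl (y n), u).

Let m := (q1 + q2) / 2.
Let m2 := (m + q2) / 2.

Definition W k : seq (ent R V E) :=
  [:: (LStar E (y k.*2), q1, m, 1%N); (LCross E (y k.*2), q1, q2, 0%N);
      (LStar E (y k.*2.+1), m, m2, 1%N)].
Fixpoint ws n := match n with 0%N => [::] | n'.+1 => W n' :: ws n' end.

Definition lidx (b : nat) (l : lab V E) :=
  exists i, (i < b)%N /\ (l = LStar E (y i) \/ l = LCross E (y i)).

Lemma flat_idx n : Defs.allP (fun e : ent R V E => lidx (n.*2) e.1.1.1) (flatten (ws n)).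
Proof.
elim: n => [|n IH] //.
have -> : flatten (ws n.+1) = W n ++ flatten (ws n) by [].
rewrite allP_cat; split.
  split; first by exists n.*2; split; [rewrite doubleS; lia|left].
  split; first by exists n.*2; split; [rewrite doubleS; lia|right].
  by split => //; exists n.*2.+1; split; [rewrite doubleS; lia|left].
apply: allP_impl IH => e [i [hi h]]; exists i; split => //.
by rewrite doubleS; lia.
Qed.

Lemma valid_ws n : valid (flatten (ws n)).
Proof.
have q0' := q0; have q12' := q12.
have hm : q1 < m by rewrite /m; have := q12; lra.
have hm2 : m < m2 by rewrite /m2 /m; have := q12; lra.
have hm3 : m2 < q2 by rewrite /m2 /m; have := q12; lra.
elim: n => [|n IH]; first by [].
have -> : flatten (ws n.+1) = W n ++ flatten (ws n) by [].
rewrite /valid allP_cat pw_cat; case: IH => IH1 IH2.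
split.
  split => //; split; first by rewrite /= q0 ltW.
  split; first by rewrite /= q0 ltW.
  by split => //; rewrite /= ltW //; lra.
split => //.
- by repeat split; rewrite /compat /=; try (by case); try (by case => /yinj h; lia).
  have key : forall (e : ent R V E) j, (n.*2 <= j)%N ->
      (e.1.1.1 = LStar E (y j) \/ e.1.1.1 = LCross E (y j)) ->
      Defs.allP (compat e) (flatten (ws n)).
    move=> e j hj he; apply: allP_impl (flat_idx n) => e' [i [hi hi']] el.
    exfalso; case: he => he; case: hi' => hi'; rewrite he hi' in el; try discriminate;
      case: el => /yinj el; lia.
  split; first by apply: (key _ n.*2) => //; left.
  split; first by apply: (key _ n.*2) => //; right.
  by split => //; apply: (key _ n.*2.+1) => //; left.
Qed.

Definition p0 := Defs.poisson_prob (rS * (m - q1)) 1 *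
  (Defs.poisson_prob (rC * (q2 - q1)) 0 * (Defs.poisson_prob (rS * (m2 - m)) 1 * 1)).

Lemma pr_W k : pr rate (W k) = p0.
Proof. by rewrite /pr !big_cons big_nil /= !hrS hrC. Qed.

Lemma p0_gt0 : 0 < p0.
Proof.
have rS0' := rS0; have rC0' := rC0.
have q12' := q12.
have hm : q1 < m by rewrite /m; lra.
have hm2 : m < m2 by rewrite /m2 /m; lra.
have pp : forall (mu : R) k, 0 < mu -> 0 < Defs.poisson_prob mu k.
  move=> mu k mu0; rewrite /Defs.poisson_prob; apply: mulr_gt0.
    by apply: mulr_gt0; [exact: expR_gt0|exact: exprn_gt0].
  by rewrite invr_gt0 ltr0n fact_gt0.
rewrite /p0 mulr1; apply: mulr_gt0; first by apply: pp; apply: mulr_gt0; lra.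
by apply: mulr_gt0; apply: pp; apply: mulr_gt0; lra.
Qed.

Lemma p0_le1 : p0 <= 1.
Proof.
have := prob_Ev hind (valid_ws 1).
have -> : flatten (ws 1) = W 0 by exact: cats0.
rewrite pr_W => h.
have := probability_le1 P (Ev_meas hind (W 0)); rewrite h lee_fin.
by [].
Qed.

Lemma prob_ws n : P (Ev N [::] `&` Neg N (ws n)) = ((1 - p0) ^+ n)%:E.
Proof.
rewrite (probL hind); last exact: valid_ws.
have -> : pr rate [::] = 1 by rewrite /pr big_nil.
rewrite mul1r; congr (_%:E).
elim: n => [|n IH]; first by rewrite big_nil expr0.
by rewrite /= big_cons IH pr_W exprS.
Qed.

Lemma onset_sub n w :
  onset_ordered (fun x => N w (LCross E x)) (fun x => N w (LStar E x)) Rg ->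
  (Ev N [::] `&` Neg N (ws n)) w.
Proof.
move=> hon; split => //.
have q12' := q12.
have hm : q1 < m by rewrite /m; lra.
have hm2 : m < m2 by rewrite /m2 /m; lra.
have hm3 : m2 < q2 by rewrite /m2 /m; lra.
elim: n => [|n IH] //; split => //.
move=> [c1 [c2 [c3 _]]].
have [t [/andP[t1 t2] St]] := count1_ex c1.
have [s [/andP[s1 s2] Ss]] := count1_ex c3.
move: t1 t2 s1 s2 => /= t1 t2 s1 s2.
have Rt : Rg (inl (y n.*2), t).
  by apply: hy; apply/andP; split; lra.
have Rs : Rg (inl (y n.*2.+1), s) by apply: hy; apply/andP; split; lra.
have tq2 : t < q2 by lra.
have hR : forall u, t < u < q2 -> Rg (inl (y n.*2), u).
  by move=> u /andP[a b]; apply: hy; apply/andP; split; lra.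
have tsq : t < s < q2 by apply/andP; split; lra.
have [s' /andP[ts' s's] Cs'] := hon (y n.*2) t q2 St Rt tq2 hR (y n.*2.+1) s Ss Rs tsq.
have hs' : q1 < s' <= q2 by apply/andP; split; lra.
exact: (count0_empty c2 hs' Cs').
Qed.


Lemma onset_negl : P.-negligible
  [set w | onset_ordered (fun x => N w (LCross E x)) (fun x => N w (LStar E x)) Rg].
Proof.
apply: (small_negl (P := P) (C := p0^-1)) => n.
exists (Ev N [::] `&` Neg N (ws n)); split.
- by apply: measurableI; [exact: (Ev_meas hind)|exact: (Neg_meas hind)].
- by move=> w; exact: onset_sub.
- rewrite prob_ws lee_fin; apply: geom_bound.
  by rewrite p0_gt0 p0_le1.
Qed.
End Unc.

Section Dich.
Variables (R : realType) (V E : Type) (Rg : set ((V + E) * R)).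
Hypothesis hR : closure_of_open Rg.

Definition Sab (ab : rat * rat) := [set x : V | forall u, ratr ab.1 <= u <= ratr ab.2 -> Rg (inl x, u)].
Definition Dab := [set ab : rat * rat | (ratr ab.1 : R) < ratr ab.2].

Lemma rel_Sab x t : Rg (inl x, t) -> exists2 ab, Dab ab & Sab ab x.
Proof.
case: hR => O [oO hO]; rewrite hO => ht.
have [u [Ou u0]] : exists u, O (inl x) u /\ 0 <= u.
  apply: contrapT => nu; move: ht; have -> : O (inl x) `&` [set u | 0 <= u] = set0.
    by apply/seteqP; split => // u [Ou u0]; apply: nu; exists u.
  by rewrite closure0.
have := oO (inl x) u Ou; move/nbhs_ballP => [e /= e0 he].
have [a] := rat_in_itvoo (ltr_pwDr e0 (lexx u)); rewrite in_itv /= => /andP[ua ae].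
have [b] := rat_in_itvoo ae; rewrite in_itv /= => /andP[ab be].
exists (a, b) => //= v /andP[av vb]; rewrite hO; apply: subset_closure; split.
  apply: he; have h0 : u - v <= 0 by lra.
  by rewrite /ball /= ler0_norm //; lra.
rewrite /=; lra.
Qed.

Lemma dichotomy :
  (exists g : nat -> option V, forall x t, Rg (inl x, t) -> exists n, g n = Some x) \/
  (exists (y : nat -> V) (ab : rat * rat), [/\ injective y, Dab ab &
     forall n, Sab ab (y n)]).
Proof.
have [fin|nfin] := pselect (forall ab, Dab ab -> finite_set (Sab ab)).
  left.
  have cU : countable (\bigcup_(ab in Dab) Sab ab).
    apply: bigcup_countable; first by move: Dab => D; exact: countableP.

    by move=> ab /fin; exact: finite_set_countable.
  have [f finj] := countable_injP _ cU.
  pose g n := if pselect (exists x, (\bigcup_(ab in Dab) Sab ab) x /\ f x = n) is left h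
    then Some (projT1 (cid h)) else None.
  exists g => x t Rt.
  have Ux : (\bigcup_(ab in Dab) Sab ab) x by have [ab ? ?] := rel_Sab Rt; exists ab.
  exists (f x); rewrite /g; case: pselect => [h|]; last by move=> n; exfalso; apply: n; exists x.
  case: cid => x' [Ux' fx] /=; congr Some.
  by apply: finj => //; rewrite inE.
right.
have [ab [Dab' nf]] : exists ab, Dab ab /\ ~ finite_set (Sab ab).
  by apply: contrapT => h; apply: nfin => ab Dab'; apply: contrapT => nf; apply: h; exists ab.
have /infiniteP/card_leP[f] : infinite_set (Sab ab) by [].
pose y n := \val (f (to_setT n)).
exists y, ab; split => //.
- move=> n1 n2 h; have h2 := injT (val_inj h).
  by move: (congr1 \val h2).
- by move=> n; exact: set_valP (f (to_setT n)).
Qed.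
End Dich.

Lemma count_enum (T : Type) (A : set T) : countable A ->
  exists g : nat -> option T, forall x, A x -> exists n, g n = Some x.
Proof.
move=> cA; have [f finj] := countable_injP _ cA.
pose g n := if pselect (exists x, A x /\ f x = n) is left h
  then Some (projT1 (cid h)) else None.
exists g => x Ax.
exists (f x); rewrite /g; case: pselect => [h|]; last by move=> n; exfalso; apply: n; exists x.
case: cid => x' [Ax' fx] /=; congr Some.
by apply: finj => //; rewrite inE.
Qed.

Lemma inf_seq (T : Type) (A : set T) : infinite_set A ->
  exists y : nat -> T, injective y /\ forall n, A (y n).
Proof.
move=> /infiniteP/card_leP[f].
pose y n := \val (f (to_setT n)).
exists y; split.
- move=> n1 n2 h; have h2 := injT (val_inj h).
  by move: (congr1 \val h2).
- by move=> n; exact: set_valP (f (to_setT n)).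
Qed.

Lemma inc_enum (V E : Type) (ends : E -> V * V) :
  bounded_degree ends -> forall x,
  exists h : nat -> option E, forall e, incident ends e x -> exists k, h k = Some e.
Proof.
move=> [D hD] x; apply: count_enum; apply: finite_set_countable.
apply: contrapT => nf.
have [y [yinj hy]] := inf_seq nf.
apply: (hD x (fun i : 'I_D.+1 => y i)) => //.
by move=> i j /yinj /val_inj.
Qed.

Section OB.
Variables (R : realType) (V E : Type) (d : measure_display) (Omega : measurableType d)
  (P : probability Omega R) (N : Omega -> lab V E -> set R) (rate : lab V E -> R).
Hypothesis hind : indep_poisson P N rate.
Hypothesis rpos : forall i, 0 < rate i.

Definition pairbad (i j : lab V E) := [set w | i <> j /\ exists t, N w i t /\ N w j t].
Definition ob (oi oj : option (lab V E)) :=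
  match oi, oj with Some i, Some j => pairbad i j | _, _ => set0 end.

Lemma ob_negl oi oj : P.-negligible (ob oi oj).
Proof.
case: oi oj => [i|] [j|] /=; try exact: negligible_set0.
have [ij|ij] := pselect (i = j).
  by apply: (negligibleS _ (negligible_set0 P)) => w [].
by apply: (negligibleS _ (two_labels hind rpos ij)) => w [].
Qed.
End OB.

Theorem lemma4 (R : realType) (V E : Type) (ends : E -> V * V) (lam tau : R)
    (d : measure_display) (Omega : measurableType d) (P : probability Omega R)
    (N : Omega -> lab V E -> set R) (eta : Omega -> R -> V -> state)
    (Rg : set ((V + E) * R)) :
  simple_graph ends -> bounded_degree ends -> 0 < lam -> 0 < tau ->
  indep_poisson P N (@seis_rate R V E lam tau) ->
  {ae P, forall w, evolves ends (fun x => N w (LCross E x)) (fun x => N w (LStar E x))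
                     (fun e => N w (LTrans V e)) (eta w)} ->
  closure_of_open Rg ->
  {ae P, forall w,
    let Cr := fun x => N w (LCross E x) in
    let St := fun x => N w (LStar E x) in
    let Tr := fun e => N w (LTrans V e) in
    onset_ordered Cr St Rg -> good (eta w) Rg ->
    (forall t x y, 0 <= t -> Rg (inl x, t) -> Rg (inl y, t) ->
       eta w t x = st2 -> eta w t y = st2 -> x = y) /\
    (forall p : spath R V E, wf_path ends p -> pot_active Cr St Tr p -> path_in Rg p ->
       eta w (p_t0 p) (p_x p) = st1 -> active Tr (eta w) p)}.
Proof.
move=> hsimple hbd lam0 tau0 hind hev hR.
have rpos : forall i, 0 < @seis_rate R V E lam tau i.
  by case => /= _; [exact: tau0|exact: ltr01|exact: mulr_gt0].
have [[g hg]|[y [ab [yinj Dab' hy]]]] := dichotomy hR.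
- have [H hH] := choice (inc_enum hbd).
  pose S1 n1 n2 := ob N (omap (fun x => LStar E x) (g n1)) (omap (fun x => LStar E x) (g n2)).
  pose S3 n k := match g n with
    | Some x => match H x k with
       | Some e => ob N (Some (LCross E x)) (Some (LTrans V e)) `|`
                   ob N (Some (LStar E x)) (Some (LTrans V e))
       | None => set0 end
    | None => set0 end.
  pose S2 n1 n2 k := match g n1, g n2, @unpickle rat k with
    | Some x, Some y, Some q => [set w | N w (LStar E y) (Eend Rg x (ratr q))]
    | _, _, _ => set0 end.
  pose Nbad := (\bigcup_n1 \bigcup_n2 S1 n1 n2) `|` (\bigcup_n \bigcup_k S3 n k) `|`
               (\bigcup_n1 \bigcup_n2 \bigcup_k S2 n1 n2 k).
  have hNB : P.-negligible Nbad.
    apply: negligibleU; first apply: negligibleU.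
    - apply: negligible_bigcup => n1; apply: negligible_bigcup => n2.
      exact: (ob_negl hind rpos).
    - apply: negligible_bigcup => n; apply: negligible_bigcup => k.
      rewrite /S3; case: (g n) => [x|]; last exact: negligible_set0.
      case: (H x k) => [e|]; last exact: negligible_set0.
      by apply: negligibleU; apply: (ob_negl hind rpos).
    - apply: negligible_bigcup => n1; apply: negligible_bigcup => n2.
      apply: negligible_bigcup => k.
      rewrite /S2; case: (g n1) => [x|]; last exact: negligible_set0.
      case: (g n2) => [z|]; last exact: negligible_set0.
      case: (unpickle k) => [q|]; last exact: negligible_set0.
      exact: (fixed_time hind rpos).
  apply: (negligibleS _ (negligibleU hev hNB)).
  move=> w nQ; apply: contrapT => nU; apply: nQ => /= hon hgood.
  have ev : evolves ends (fun x => N w (LCross E x)) (fun x => N w (LStar E x))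
                     (fun e => N w (LTrans V e)) (eta w).
    by apply: contrapT => ne; apply: nU; left.
  have Hs1 : forall (x y : V) (t : R), x <> y -> Rg (inl x, t) -> Rg (inl y, t) ->
      N w (LStar E x) t -> N w (LStar E y) t -> False.
    move=> x z t xz Rx Rz Sx Sz; have [n1 e1] := hg x t Rx; have [n2 e2] := hg z t Rz.
    apply: nU; right; left; left; exists n1 => //; exists n2 => //.
    rewrite /S1 e1 e2 /=; split; first by case.
    by exists t.
  have Hs2 : forall (x y : V) (t : R) (q : rat), Rg (inl x, t) -> Rg (inl y, t) ->
      t = Eend Rg x (ratr q) -> N w (LStar E y) t -> False.
    move=> x z t q Rx Rz et Sz; have [n1 e1] := hg x t Rx; have [n2 e2] := hg z t Rz.
    apply: nU; right; right; exists n1 => //; exists n2 => //; exists (pickle q) => //.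
    by rewrite /S2 e1 e2 pickleK /= -et.
  have Hh : forall (e : E) (x : V) (t : R), Rg (inl x, t) -> incident ends e x ->
      N w (LTrans V e) t -> ~ N w (LCross E x) t /\ ~ N w (LStar E x) t.
    move=> e x t Rx ie Te; have [n e1] := hg x t Rx; have [k e2] := hH x e ie.
    split => hc; apply: nU; right; left; right; exists n => //; exists k => //;
      rewrite /S3 e1 e2; [left|right]; (split; [by []|by exists t]).
  have P1 := part1 ev hR hon hgood Hs1 Hs2.
  split; first by move=> t x z _ Rx Rz ex ez; exact: P1 Rx Rz ex ez.
  move=> p wf pa pin e1.
  exact: (part2 ev hR hsimple.1 (fun t x z => @P1 t x z) Hh wf pa pin e1).
- pose q1 : R := ratr ab.1.
  pose q2 : R := ratr ab.2.
  have q12 : q1 < q2 by [].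
  have hy' : forall n u, q1 <= u <= q2 -> Rg (inl (y n), u) by move=> n u; exact: hy.
  have q0 : 0 <= q1 by apply: (reg_ge0 hR (hy' 0%N q1 _)); rewrite lexx ltW.
  have On := onset_negl hind (rS := 1) (rC := tau) (fun x => erefl) (fun x => erefl)
    ltr01 tau0 yinj q0 q12 hy'.
  apply: (negligibleS _ On) => w /= nQ; apply: contrapT => non; apply: nQ => hon.
  by exfalso; apply: non.
Qed.
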